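(* Let $\mathcal{H}$ be a complex Hilbert space, let $T, S\in\mathbb{B}(\mathcal{H})$, and let $N(\cdot)$ be a self-adjoint algebra norm on $\mathbb{B}(\mathcal{H})$. Then, for each choice of sign $\pm$, $$w_{N}(TS) \leq \min\Big\{N(T)w_{N}(S) + \tfrac{1}{2} w_{N}(TS \pm ST^* ),\ N(S)w_{N}(T) + \tfrac{1}{2} w_{N}(TS \pm S^*T)\Big\} \leq 2\min\Big\{N(T)w_{N}(S),\ N(S)w_{N}(T)\Big\} \leq 4w_{N}(T)w_{N}(S).$$
   Context: $\mathbb{B}(\mathcal{H})$ is the algebra of bounded linear operators on $\mathcal{H}$. A norm $N(\cdot)$ on $\mathbb{B}(\mathcal{H})$ is an algebra norm if $N(TS)\le N(T)N(S)$ for all $T,S$, and self-adjoint if $N(T^* )=N(T)$ for all $T$. For $A\in\mathbb{B}(\mathcal{H})$, ${\rm Re}(A)=\frac{A+A^*}{2}$. The generalized numerical radius is $w_N(T)=\sup_{\theta\in\mathbb{R}} N\big({\rm Re}(e^{i\theta}T)\big)$. *)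

(* Defs.v *)
From HB Require Import structures.
From mathcomp Require Import all_boot all_order all_algebra.
From mathcomp Require Import classical_sets reals trigo.
From mathcomp Require complex.
Import complex.ComplexField.
From Stdlib Require Import ClassicalEpsilon.
Set Implicit Arguments. Unset Strict Implicit. Unset Printing Implicit Defensive.
Import Order.TTheory GRing.Theory Num.Theory.
Local Open Scope ring_scope.

Notation CC R := (complex.complex R).

Section Hilbert.
Variables (R : realType) (V : lmodType (CC R)) (inner : V -> V -> CC R).

Definition is_inner_product : Prop :=
  [/\ (forall (a : CC R) (x y z : V), inner (a *: x + y) z = a * inner x z + inner y z),
      (forall x y : V, inner y x = complex.conjc (inner x y)),
      (forall x : V, 0 <= inner x x) &
      (forall x : V, inner x x = 0 -> x = 0)].

Definition hnorm (x : V) : R := Num.sqrt (complex.Re (inner x x)).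

Definition hcomplete : Prop :=
  forall u : nat -> V,
    (forall e : R, 0 < e -> exists N : nat, forall m n : nat,
         (N <= m)%N -> (N <= n)%N -> hnorm (u m - u n) < e) ->
    exists l : V, forall e : R, 0 < e -> exists N : nat, forall n : nat,
         (N <= n)%N -> hnorm (u n - l) < e.

Definition is_hilbert : Prop := is_inner_product /\ hcomplete.

Definition bounded_op (A : V -> V) : Prop :=
  (forall (a : CC R) (x y : V), A (a *: x + y) = a *: A x + A y) /\
  exists M : R, forall x : V, hnorm (A x) <= M * hnorm x.

Definition op_add (A B : V -> V) : V -> V := fun x => A x + B x.
Definition op_scale (c : CC R) (A : V -> V) : V -> V := fun x => c *: A x.
Definition op_mul (A B : V -> V) : V -> V := fun x => A (B x).
Definition op_zero : V -> V := fun _ => 0.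

Definition adjoint (A : V -> V) : V -> V :=
  epsilon (inhabits op_zero)
    (fun B : V -> V => forall x y : V, inner (A x) y = inner x (B y)).

Definition ReOp (A : V -> V) : V -> V :=
  op_scale (2%:R)^-1 (op_add A (adjoint A)).

Definition algebra_norm (N : (V -> V) -> R) : Prop :=
  [/\ (forall A, bounded_op A -> 0 <= N A),
      (forall A, bounded_op A -> N A = 0 -> A = op_zero),
      (forall c A, bounded_op A -> N (op_scale c A) = complex.ComplexField.Normc.normc c * N A),
      (forall A B, bounded_op A -> bounded_op B -> N (op_add A B) <= N A + N B) &
      (forall A B, bounded_op A -> bounded_op B -> N (op_mul A B) <= N A * N B)].

Definition selfadjoint_norm (N : (V -> V) -> R) : Prop :=
  forall A, bounded_op A -> N (adjoint A) = N A.

Definition expi (t : R) : CC R := complex.Complex (cos t) (sin t).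

Definition wN (N : (V -> V) -> R) (A : V -> V) : R :=
  sup [set N (ReOp (op_scale (expi t) A)) | t in [set: R]]%classic.
End Hilbert.

(* Main.v *)
Require Import Defs.
From HB Require Import structures.
From mathcomp Require Import all_boot all_order all_algebra.
From mathcomp Require Import classical_sets reals trigo.
From mathcomp Require complex.
Import complex.ComplexField.
From mathcomp Require Import ring lra.
From Stdlib Require Import Classical ClassicalEpsilon FunctionalExtensionality.
Import Order.TTheory GRing.Theory Num.Theory.
Local Open Scope ring_scope.
Set Implicit Arguments. Unset Strict Implicit. Unset Printing Implicit Defensive.

Section Cplx.
Variable R : realType.
Local Notation C := (CC R).
Local Notation Re := (@complex.Re R).
Local Notation Im := (@complex.Im R).
Local Notation cj := (@complex.conjc R).
Implicit Types z w : C.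

Lemma cReD z w : Re (z + w) = Re z + Re w. Proof. by case: z; case: w. Qed.
Lemma cImD z w : Im (z + w) = Im z + Im w. Proof. by case: z; case: w. Qed.
Lemma cReN z : Re (- z) = - Re z. Proof. by case: z. Qed.
Lemma cImN z : Im (- z) = - Im z. Proof. by case: z. Qed.
Lemma cReB z w : Re (z - w) = Re z - Re w. Proof. by case: z; case: w. Qed.
Lemma cImB z w : Im (z - w) = Im z - Im w. Proof. by case: z; case: w. Qed.
Lemma cReM z w : Re (z * w) = Re z * Re w - Im z * Im w. Proof. by case: z; case: w. Qed.
Lemma cImM z w : Im (z * w) = Re z * Im w + Im z * Re w. Proof. by case: z; case: w. Qed.
Lemma cReJ z : Re (cj z) = Re z. Proof. by case: z. Qed.
Lemma cImJ z : Im (cj z) = - Im z. Proof. by case: z. Qed.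
Lemma cRe0 : Re 0 = 0. Proof. by []. Qed.
Lemma cIm0 : Im 0 = 0. Proof. by []. Qed.
Lemma cRe1 : Re 1 = 1. Proof. by []. Qed.
Lemma cIm1 : Im 1 = 0. Proof. by []. Qed.
Lemma cReC a b : Re (complex.Complex a b) = a. Proof. by []. Qed.
Lemma cImC a b : Im (complex.Complex a b) = b. Proof. by []. Qed.
Lemma cplx_eq z w : Re z = Re w -> Im z = Im w -> z = w.
Proof. by case: z => a b; case: w => c d /= -> ->. Qed.

Definition cE := (cReD, cImD, cReN, cImN, cReB, cImB, cReM, cImM, cReJ, cImJ,
  cRe0, cIm0, cRe1, cIm1, cReC, cImC).

Lemma cjM z w : cj (z * w) = cj z * cj w.
Proof. apply: cplx_eq; rewrite !cE; ring. Qed.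
Lemma cjD z w : cj (z + w) = cj z + cj w.
Proof. apply: cplx_eq; rewrite !cE; ring. Qed.
Lemma cjN z : cj (- z) = - cj z.
Proof. apply: cplx_eq; rewrite !cE; ring. Qed.
Lemma cjK z : cj (cj z) = z.
Proof. apply: cplx_eq; rewrite !cE; ring. Qed.
Lemma cj1 : cj 1 = 1. Proof. apply: cplx_eq; rewrite !cE; ring. Qed.
Lemma cjN1 : cj (-1) = -1. Proof. apply: cplx_eq; rewrite !cE; ring. Qed.
Lemma cj0 : cj 0 = 0. Proof. apply: cplx_eq; rewrite !cE; ring. Qed.

Lemma cRe_nat n : Re (n%:R) = n%:R.
Proof. by elim: n => [|n IH] //; rewrite !mulrS cReD IH. Qed.
Lemma cIm_nat n : Im (n%:R) = 0.
Proof. by elim: n => [|n IH] //; rewrite !mulrS cImD IH addr0. Qed.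
Lemma two_inv : (2%:R : C)^-1 = complex.Complex (2%:R^-1) 0.
Proof.
apply: (@mulIf _ (2%:R : C)); first by rewrite pnatr_eq0.
rewrite mulVf ?pnatr_eq0 //; apply: cplx_eq; rewrite !cE /=.
  lra.
lra.
Qed.
Lemma cRe_half : Re (2%:R^-1) = 2%:R^-1. Proof. by rewrite two_inv. Qed.
Lemma cIm_half : Im (2%:R^-1) = 0. Proof. by rewrite two_inv. Qed.
Lemma cj_half : cj (2%:R^-1) = 2%:R^-1.
Proof. by rewrite two_inv; apply: cplx_eq => //=; rewrite oppr0. Qed.
End Cplx.

Lemma inv_mono (R : realType) (k n : nat) : (k <= n)%N -> n.+1%:R^-1 <= k.+1%:R^-1 :> R.
Proof. move=> h; by rewrite lef_pV2 ?posrE ?ltr0Sn // ler_nat ltnS. Qed.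
Lemma invS_gt0 (R : realType) n : 0 < n.+1%:R^-1 :> R.
Proof. by rewrite invr_gt0 ltr0Sn. Qed.
Lemma invS_le1 (R : realType) n : n.+1%:R^-1 <= 1 :> R.
Proof. by rewrite invf_le1 ?ler1n ?ltr0Sn. Qed.
Lemma le0_small (R : realType) (q : R) : (forall e, 0 < e -> q <= e) -> q <= 0.
Proof. move=> h; have [//|qp] := lerP q 0; have := h (q / 2%:R); lra. Qed.

Section IP.
Variables (R : realType) (V : lmodType (CC R)) (inner : V -> V -> CC R).
Hypothesis hI : is_inner_product inner.
Local Notation C := (CC R).
Local Notation Re := (@complex.Re R).
Local Notation Im := (@complex.Im R).
Local Notation cj := (@complex.conjc R).
Implicit Types x y z u v : V.

Lemma ipDl x y z : inner (x + y) z = inner x z + inner y z.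
Proof. case: hI => h _ _ _. by have := h 1 x y z; rewrite scale1r mul1r. Qed.
Lemma ip0l z : inner 0 z = 0.
Proof. have h := ipDl 0 0 z; rewrite addr0 in h.
by apply: (addrI (inner 0 z)); rewrite addr0 -h. Qed.
Lemma ipZl a x z : inner (a *: x) z = a * inner x z.
Proof. case: hI => h _ _ _. by have := h a x 0 z; rewrite addr0 ip0l addr0. Qed.
Lemma ipC x y : inner y x = cj (inner x y).
Proof. by case: hI. Qed.
Lemma ipDr x y z : inner z (x + y) = inner z x + inner z y.
Proof. by rewrite ipC ipDl cjD -!ipC. Qed.
Lemma ipZr a x z : inner z (a *: x) = cj a * inner z x.
Proof. by rewrite ipC ipZl cjM -!ipC. Qed.
Lemma ip0r z : inner z 0 = 0.
Proof. by rewrite ipC ip0l cj0. Qed.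
Lemma ipNl x z : inner (- x) z = - inner x z.
Proof. by rewrite -scaleN1r ipZl mulN1r. Qed.
Lemma ipNr x z : inner z (- x) = - inner z x.
Proof. by rewrite -scaleN1r ipZr cjN1 mulN1r. Qed.
Lemma ipBl x y z : inner (x - y) z = inner x z - inner y z.
Proof. by rewrite ipDl ipNl. Qed.
Lemma ipBr x y z : inner z (x - y) = inner z x - inner z y.
Proof. by rewrite ipDr ipNr. Qed.

Definition nsq x := Re (inner x x).

Lemma ip_self_Im x : Im (inner x x) = 0.
Proof. case: hI => _ _ h _; have := h x; rewrite complex.lecE => /andP[/eqP -> _]. by []. Qed.
Lemma nrm2_ge0 x : 0 <= nsq x.
Proof. case: hI => _ _ h _; have := h x; rewrite complex.lecE => /andP[_]. by []. Qed.
Lemma ip_self x : inner x x = complex.Complex (nsq x) 0.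
Proof. by apply: cplx_eq => //=; rewrite ip_self_Im. Qed.
Lemma nrm2_eq0 x : nsq x = 0 -> x = 0.
Proof. case: hI => _ _ _ h e; apply: h; by rewrite ip_self e. Qed.
Lemma nrm2D x y : nsq (x + y) = nsq x + 2%:R * Re (inner x y) + nsq y.
Proof. rewrite /nsq !ipDl !ipDr (ipC x y) !cE; lra. Qed.
Lemma nrm2N x : nsq (- x) = nsq x.
Proof. by rewrite /nsq ipNl ipNr opprK. Qed.

Lemma CS_sq x y : Re (inner x y) ^+ 2 + Im (inner x y) ^+ 2 <= nsq x * nsq y.
Proof.
have [n0|npos] := eqVneq (nsq y) 0.
  rewrite (@nrm2_eq0 y n0) ip0r /= expr2 mulr0 addr0 /nsq ip0r /=. by rewrite mulr0.
have ngt : 0 < nsq y by rewrite lt_def npos nrm2_ge0.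
set p := inner x y; set n := nsq y.
have := nrm2_ge0 (complex.Complex n 0 *: x - p *: y).
rewrite /nsq !ipBl !ipBr !ipZl !ipZr !ip_self (ipC x y) -/p -/n.
rewrite !cE => h.
have h2 : 0 <= n * (n * nsq x - (Re p ^+ 2 + Im p ^+ 2)) by rewrite -/n in h; nra.
nra.
Qed.

Definition hn x := hnorm inner x.
Lemma hn_ge0 x : 0 <= hnorm inner x. Proof. exact: sqrtr_ge0. Qed.
Lemma hn_sq x : hnorm inner x ^+ 2 = nsq x. Proof. by rewrite sqr_sqrtr // nrm2_ge0. Qed.

Lemma CS_Re x y : Re (inner x y) <= hnorm inner x * hnorm inner y.
Proof.
have h := CS_sq x y; rewrite -!hn_sq in h.
have hm : 0 <= hnorm inner x * hnorm inner y by apply: mulr_ge0; apply: hn_ge0.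
have h' : Re (inner x y) ^+ 2 <= (hnorm inner x * hnorm inner y) ^+ 2.
  rewrite exprMn; have := sqr_ge0 (Im (inner x y)); lra.
move: hm h'; set r := Re _; set m := _ * _ => hm h'.
have [r0|r0] := lerP r 0; first exact: le_trans r0 hm.
nra.
Qed.

Lemma hn_triangle x y : hnorm inner (x + y) <= hnorm inner x + hnorm inner y.
Proof.
have h := nrm2D x y; rewrite -!hn_sq in h.
have := CS_Re x y; have := hn_ge0 x; have := hn_ge0 y; have := hn_ge0 (x + y); nra.
Qed.

Lemma ip_ext u w : (forall x, inner u x = inner w x) -> u = w.
Proof.
move=> h; apply/eqP; rewrite -subr_eq0; apply/eqP; apply: nrm2_eq0.
by rewrite /nsq ipBl h -ipBl subrr ip0l.
Qed.
Lemma ip_extr u w : (forall x, inner x u = inner x w) -> u = w.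
Proof. move=> h; apply: ip_ext => x; by rewrite ipC h -ipC. Qed.


Lemma nrm2Z (c : C) x : nsq (c *: x) = (Re c ^+ 2 + Im c ^+ 2) * nsq x.
Proof. rewrite /nsq ipZl ipZr ip_self !cE /=; ring. Qed.

Lemma par x y : nsq (x - y) = 2%:R * nsq x + 2%:R * nsq y - nsq (x + y).
Proof. rewrite !nrm2D nrm2N ipNr cReN; lra. Qed.

Lemma hnN x : hnorm inner (- x) = hnorm inner x.
Proof. by rewrite /hnorm -/(nsq _) nrm2N. Qed.

Section Riesz.
Hypothesis hC : hcomplete inner.
Variable f : V -> C.
Hypothesis flin : forall a x y, f (a *: x + y) = a * f x + f y.
Variable K : R.
Hypothesis fbd : forall x, Re (f x) ^+ 2 + Im (f x) ^+ 2 <= K * nsq x.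

Lemma f0 : f 0 = 0.
Proof. have h := flin 1 0 0; rewrite scale1r addr0 mul1r in h.
by apply: (addrI (f 0)); rewrite addr0 -h. Qed.
Lemma fZ a x : f (a *: x) = a * f x.
Proof. by have := flin a x 0; rewrite addr0 f0 addr0. Qed.
Lemma fD x y : f (x + y) = f x + f y.
Proof. by have := flin 1 x y; rewrite scale1r mul1r. Qed.
Lemma fB x y : f (x - y) = f x - f y.
Proof. by rewrite fD -scaleN1r fZ mulN1r. Qed.

Lemma riesz : exists z, forall x, f x = inner x z.
Proof.
case: (classic (forall x, f x = 0)) => [h0|].
  by exists 0 => x; rewrite ip0r h0.
move=> /not_all_ex_not [x0 hx0].
have fx1 : f ((f x0)^-1 *: x0) = 1 by rewrite fZ mulVf //; apply/eqP.
pose P := [set x | f x = 1]%classic.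
pose E := [set nsq x | x in P]%classic.
have E0 : (E !=set0)%classic by exists (nsq ((f x0)^-1 *: x0)), ((f x0)^-1 *: x0).
have Elb : has_lbound E by exists 0 => _ [x _ <-]; apply: nrm2_ge0.
set D := inf E.
have DleE : forall x, f x = 1 -> D <= nsq x.
  by move=> x hx; apply: (ge_inf Elb); exists x.
have D0 : 0 <= D by apply: lb_le_inf E0 _ => _ [x _ <-]; apply: nrm2_ge0.
have sq : forall n : nat, exists x, f x = 1 /\ nsq x < D + n.+1%:R^-1.
  move=> n; have [_ [x Px <-] h] := inf_adherent (invS_gt0 R n) (conj E0 Elb).
  by exists x.
have [xs hxs] : exists xs : nat -> V,
    forall n, f (xs n) = 1 /\ nsq (xs n) < D + n.+1%:R^-1.
  exists (fun n => epsilon (inhabits 0)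
     (fun x => f x = 1 /\ nsq x < D + n.+1%:R^-1)).
  by move=> n; exact: (epsilon_spec _ _ (sq n)).
have mid : forall x y, f x = 1 -> f y = 1 -> 4%:R * D <= nsq (x + y).
  move=> x y hx hy.
  have h1 : f (2%:R^-1 *: (x + y)) = 1.
    by rewrite fZ fD hx hy -[1 + 1]/(2%:R : C) mulVf // pnatr_eq0.
  have := DleE _ h1; rewrite nrm2Z cRe_half cIm_half => h.
  have := nrm2_ge0 (x + y); lra.
have cauchy : forall e, 0 < e -> exists N, forall m n, (N <= m)%N -> (N <= n)%N ->
    hnorm inner (xs m - xs n) < e.
  move=> e e0.
  have e2 : 0 < e ^+ 2 / 4%:R by apply: divr_gt0 => //; apply: exprn_gt0.
  have [k hk] := ltr_add_invr e2.
  exists k => m n km kn.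
  have h1 := inv_mono R km; have h2 := inv_mono R kn.
  have h3 := par (xs m) (xs n); have h4 := mid _ _ (hxs m).1 (hxs n).1.
  have h5 := (hxs m).2; have h6 := (hxs n).2.
  have hs := hn_sq (xs m - xs n); have hg := hn_ge0 (xs m - xs n).
  have h7 : nsq (xs m - xs n) < e ^+ 2.
    move: hk h1 h2 h5 h6; set a := m.+1%:R^-1; set b := n.+1%:R^-1; set c := k.+1%:R^-1; set ee := e ^+ 2; lra.
  rewrite -hs in h7; nra.
have [l hl] := hC cauchy.
have conv_sq : forall eta, 0 < eta -> exists N, forall n, (N <= n)%N -> nsq (xs n - l) < eta.
  move=> eta he; have [N hN] : exists N, forall n, (N <= n)%N -> hnorm inner (xs n - l) < Num.sqrt eta by apply: hl; rewrite sqrtr_gt0.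
  exists N => n hn; have := hN n hn; rewrite -hn_sq.
  have := hn_ge0 (xs n - l); have := sqr_sqrtr (ltW he); have := sqrtr_ge0 eta; nra.
have fl : f l = 1.
  set g := f l - 1.
  have q0 : Re g ^+ 2 + Im g ^+ 2 <= 0.
    apply: le0_small => eta he.
    have hK : 0 < `|K| + 1 by have := normr_ge0 K; lra.
    have [N hN] := conv_sq _ (divr_gt0 he hK).
    have h := fbd (xs N - l); rewrite fB (hxs N).1 in h.
    have e1 : 1 - f l = - g by rewrite /g opprB.
    rewrite e1 cReN cImN !sqrrN in h.
    have h2 := hN N (leqnn N); rewrite ltr_pdivlMr // in h2.
    have := nrm2_ge0 (xs N - l); have := ler_norm K; have := normr_ge0 K; nra.
  have hr : Re g = 0.
    have : Re g ^+ 2 = 0.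
      apply/eqP; rewrite eq_le sqr_ge0 andbT; have := sqr_ge0 (Im g); lra.
    by move/eqP; rewrite sqrf_eq0 => /eqP.
  have hi : Im g = 0.
    have : Im g ^+ 2 = 0.
      apply/eqP; rewrite eq_le sqr_ge0 andbT; have := sqr_ge0 (Re g); lra.
    by move/eqP; rewrite sqrf_eq0 => /eqP.
  by apply: subr0_eq; apply: cplx_eq.
have key : forall eps, 0 < eps -> eps <= 1 -> nsq l <= D + eps.
  move=> eps he he1.
  have [k hk] : exists k : nat, 0 + k.+1%:R^-1 < eps / 2%:R.
    by apply: ltr_add_invr; apply: divr_gt0.
  set e := Num.min 1 (eps / (8%:R * (D + 2%:R))).
  have hD : 0 < 8%:R * (D + 2%:R) by lra.
  have e0 : 0 < e by rewrite lt_min ltr01 /=; apply: divr_gt0.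
  have e1 : e <= 1 by rewrite ge_min lexx.
  have e2 : e * (8%:R * (D + 2%:R)) <= eps.
    by rewrite -ler_pdivlMr // ge_min lexx orbT.
  have [N2 hN2] := hl e e0.
  pose n := maxn k N2.
  have q := hN2 n (leq_maxr _ _).
  have pa := (hxs n).2.
  have hi := inv_mono R (leq_maxl k N2 : (k <= n)%N).
  have tri := hn_triangle (xs n) (l - xs n).
  have el : xs n + (l - xs n) = l by rewrite addrC subrK.
  rewrite el -opprB hnN in tri.
  rewrite -(hn_sq (xs n)) in pa; rewrite -hn_sq.
  move: tri q pa hi hk e2 e1 e0 he1 he D0.
  have := hn_ge0 (xs n); have := hn_ge0 (xs n - l); have := hn_ge0 l.
  set p := hnorm inner (xs n); set q := hnorm inner (xs n - l); set h := hnorm inner l.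
  set a := n.+1%:R^-1; set b := k.+1%:R^-1.
  move=> h0 q0 p0 tri qe pa ab bk e2 e1 e0 he1 he D0.
  have hp : p <= D + 2%:R by nra.
  have hpq : p * q <= (D + 2%:R) * e by apply: ler_pM => //; apply: ltW.
  have hqq : q * q <= e by have := ler_pM q0 q0 (ltW qe) (ltW qe); nra.
  have hh : h * h <= (p + q) * (p + q) by apply: ler_pM.
  rewrite expr2; nra.
have nl : nsq l <= D.
  rewrite -subr_le0; apply: le0_small => eps he.
  have := key (Num.min eps 1); rewrite lt_min he ltr01 ge_min lexx orbT => /(_ isT isT).
  have : Num.min eps 1 <= eps by rewrite ge_min lexx.
  lra.
have ortho : forall m, f m = 0 -> inner m l = 0.
  move=> m hm; set M := nsq m.
  have M0 : 0 <= M := nrm2_ge0 m.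
  pose r := (M + 1)^-1.
  have r0 : 0 < r by rewrite invr_gt0; lra.
  have rM : r * M = 1 - r.
    have : r * (M + 1) = 1 by rewrite mulVf //; apply: lt0r_neq0; exact: ltr_wpDl M0 ltr01.
    rewrite mulrDr mulr1; lra.
  have fc : f (l + (- (complex.Complex r 0 * cj (inner m l))) *: m) = 1.
    by rewrite fD fZ hm mulr0 addr0.
  have := DleE _ fc; rewrite nrm2D nrm2Z ipZr (ipC m l) !cE /=.
  move Ea : (inner m l) => a h.
  have e3 : r ^+ 2 * (Re a ^+ 2 + Im a ^+ 2) * M = r * (Re a ^+ 2 + Im a ^+ 2) * (1 - r).
    by rewrite -rM; ring.
  have hs : (Re a ^+ 2 + Im a ^+ 2) * (r * (1 + r)) <= 0 by nra.
  have hs2 : Re a ^+ 2 + Im a ^+ 2 <= 0.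
    have hr1 : 0 < r * (1 + r) by apply: mulr_gt0 => //; lra.
    move: hs; rewrite -[X in X <= 0 -> _]mulrC pmulr_rle0 //.

  have hr : Re a = 0.
    have : Re a ^+ 2 = 0.
      apply/eqP; rewrite eq_le sqr_ge0 andbT; have := sqr_ge0 (Im a); lra.
    by move/eqP; rewrite sqrf_eq0 => /eqP.
  have hi : Im a = 0.
    have : Im a ^+ 2 = 0.
      apply/eqP; rewrite eq_le sqr_ge0 andbT; have := sqr_ge0 (Re a); lra.
    by move/eqP; rewrite sqrf_eq0 => /eqP.
  exact: cplx_eq.
have l0 : 0 < nsq l.
  rewrite lt_def nrm2_ge0 andbT; apply/negP => /eqP h0.
  move: fl; rewrite (nrm2_eq0 h0) f0 => h01.
  by have := congr1 (@complex.Re R) h01; rewrite cRe0 cRe1; lra.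
exists (complex.Complex (nsq l)^-1 0 *: l) => x.
have hx : inner (x - f x *: l) l = 0 by apply: ortho; rewrite fB fZ fl mulr1 subrr.
rewrite ipBl ipZl ip_self in hx; move/subr0_eq: hx => hx.
rewrite ipZr hx mulrA (mulrC _ (f x)) -mulrA.
have -> : cj (complex.Complex (nsq l)^-1 0) * complex.Complex (nsq l) 0 = 1.
  apply: cplx_eq; rewrite !cE /=; last by ring.
  by rewrite mulr0 subr0 mulVf //; apply: lt0r_neq0.
by rewrite mulr1.
Qed.
End Riesz.


Section Ops.
Hypothesis hC : hcomplete inner.
Local Notation bnd := (bounded_op inner).
Local Notation adj := (adjoint inner).
Implicit Types A B : V -> V.

Definition is_adj A B := forall x y, inner (A x) y = inner x (B y).

Lemma linZ A : bnd A -> forall a x, A (a *: x) = a *: A x.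
Proof.
case=> hl _ a x.
have h0 : A 0 = 0.
  have := hl 1 0 0; rewrite !scale1r !addr0 => h.
  by apply: (addrI (A 0)); rewrite addr0 -h.
by have := hl a x 0; rewrite !addr0 h0 addr0.
Qed.
Lemma linD A : bnd A -> forall x y, A (x + y) = A x + A y.
Proof. by case=> hl _ x y; have := hl 1 x y; rewrite !scale1r. Qed.

Lemma bnd_pos A : bnd A -> exists M, 0 <= M /\ forall x, hnorm inner (A x) <= M * hnorm inner x.
Proof.
case=> _ [M hM]; exists (Num.max M 0); split; first by rewrite le_max lexx orbT.
move=> x; apply: (le_trans (hM x)); apply: ler_wpM2r; first exact: hn_ge0.
by rewrite le_max lexx.
Qed.

Lemma adj_exists A : bnd A -> exists B, is_adj A B.
Proof.
move=> hA; have [M [M0 hM]] := bnd_pos hA.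
have ex : forall y, exists z, forall x, inner (A x) y = inner x z.
  move=> y.
  apply: (@riesz hC (fun x => inner (A x) y) _ (M ^+ 2 * nsq y)).
    by move=> a x x'; rewrite /= (linD hA) (linZ hA) ipDl ipZl.
  move=> x; apply: (le_trans (CS_sq _ _)).
  have h1 := hM x; have h2 := hn_ge0 (A x); have h3 := hn_ge0 x.
  rewrite -!hn_sq; have h4 := hn_ge0 y.
  have : hnorm inner (A x) ^+ 2 <= (M * hnorm inner x) ^+ 2.
    by rewrite !expr2; apply: ler_pM.
  rewrite exprMn => h5.
  have h6 := sqr_ge0 (hnorm inner y).
  nra.
exists (fun y => epsilon (inhabits 0) (fun z => forall x, inner (A x) y = inner x z)).
move=> x y; exact: (epsilon_spec _ _ (ex y)).
Qed.

Lemma adj_spec A : bnd A -> is_adj A (adj A).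
Proof.
move=> hA; have [B hB] := adj_exists hA.
rewrite /adjoint; exact: (epsilon_spec _ _ (ex_intro _ B hB)).
Qed.

Lemma adj_uniq A B : bnd A -> is_adj A B -> adj A = B.
Proof.
move=> hA hB; apply: functional_extensionality => y; apply: ip_extr => x.
by rewrite -adj_spec // hB.
Qed.

Lemma adj_bnd A : bnd A -> bnd (adj A).
Proof.
move=> hA; split.
  move=> a x y; apply: ip_extr => z.
  by rewrite ipDr ipZr -!(adj_spec hA) ipDr ipZr.
have [M [M0 hM]] := bnd_pos hA.
exists M => y.
have h := adj_spec hA (adj A y) y.
have h1 := CS_Re (A (adj A y)) y.
rewrite h -/(nsq _) -hn_sq in h1.
have h2 := hM (adj A y).
have := hn_ge0 (adj A y); have := hn_ge0 y; have := hn_ge0 (A (adj A y)).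
set a := hnorm inner (adj A y); set b := hnorm inner y; set c := hnorm inner (A _).
move=> c0 b0 a0.
have h3 : a ^+ 2 <= M * a * b.
  by apply: (le_trans h1); apply: ler_wpM2r.
have hMb := mulr_ge0 M0 b0.
have [//|hlt] := lerP a (M * b).
have a0' : 0 < a := le_lt_trans hMb hlt.
have : a * (M * b) < a * a by rewrite ltr_pM2l.
rewrite -expr2; nra.
Qed.

Lemma bnd_add A B : bnd A -> bnd B -> bnd (op_add A B).
Proof.
move=> hA hB; split.
  move=> a x y; rewrite /op_add (linD hA) (linD hB) (linZ hA) (linZ hB).
  by rewrite scalerDr addrACA.
have [M [M0 hM]] := bnd_pos hA; have [M' [M0' hM']] := bnd_pos hB.
exists (M + M') => x; rewrite /op_add.
apply: (le_trans (hn_triangle _ _)); have := hM x; have := hM' x; lra.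
Qed.

Lemma bnd_mul A B : bnd A -> bnd B -> bnd (op_mul A B).
Proof.
move=> hA hB; split.
  by move=> a x y; rewrite /op_mul (linD hB) (linZ hB) (linD hA) (linZ hA).
have [M [M0 hM]] := bnd_pos hA; have [M' [M0' hM']] := bnd_pos hB.
exists (M * M') => x; rewrite /op_mul.
apply: (le_trans (hM _)); rewrite -mulrA; apply: ler_wpM2l => //.
Qed.

Lemma hnZ (c : C) x : hnorm inner (c *: x) =
  Num.sqrt (Re c ^+ 2 + Im c ^+ 2) * hnorm inner x.
Proof. rewrite /hnorm -/(nsq _) nrm2Z sqrtrM //; apply: addr_ge0; apply: sqr_ge0. Qed.

Lemma bnd_scale c A : bnd A -> bnd (op_scale c A).
Proof.
move=> hA; split.
  move=> a x y; rewrite /op_scale (linD hA) (linZ hA) scalerDr !scalerA.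
  by rewrite mulrC.
have [M [M0 hM]] := bnd_pos hA.
exists (Num.sqrt (Re c ^+ 2 + Im c ^+ 2) * M) => x; rewrite /op_scale hnZ -mulrA.
by apply: ler_wpM2l => //; apply: sqrtr_ge0.
Qed.

Lemma adj_mul A B : bnd A -> bnd B -> adj (op_mul A B) = op_mul (adj B) (adj A).
Proof.
move=> hA hB; apply: adj_uniq; first exact: bnd_mul.
by move=> x y; rewrite /op_mul !adj_spec.
Qed.
Lemma adj_add A B : bnd A -> bnd B -> adj (op_add A B) = op_add (adj A) (adj B).
Proof.
move=> hA hB; apply: adj_uniq; first exact: bnd_add.
by move=> x y; rewrite /op_add ipDl ipDr !adj_spec.
Qed.
Lemma adj_scale c A : bnd A -> adj (op_scale c A) = op_scale (cj c) (adj A).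
Proof.
move=> hA; apply: adj_uniq; first exact: bnd_scale.
by move=> x y; rewrite /op_scale ipZl ipZr cjK adj_spec.
Qed.
Lemma adj_adj A : bnd A -> adj (adj A) = A.
Proof.
move=> hA; apply: adj_uniq; first exact: adj_bnd.
by move=> x y; rewrite ipC -adj_spec // -ipC.
Qed.
Lemma bnd_ReOp A : bnd A -> bnd (ReOp inner A).
Proof. by move=> hA; apply: bnd_scale; apply: bnd_add => //; apply: adj_bnd. Qed.




Ltac bnd_tac := repeat match goal with
  | |- bounded_op _ (op_add _ _) => apply: bnd_add
  | |- bounded_op _ (op_mul _ _) => apply: bnd_mul
  | |- bounded_op _ (op_scale _ _) => apply: bnd_scale
  | |- bounded_op _ (ReOp _ _) => apply: bnd_ReOp
  | |- bounded_op _ (adjoint _ _) => apply: adj_bnd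
  | |- _ => assumption end.
Ltac adjs := repeat match goal with
 | |- context [adjoint _ (adjoint _ ?A)] => rewrite (@adj_adj A); [|bnd_tac]
 | |- context [adjoint _ (op_scale ?c ?A)] => rewrite (@adj_scale c A); [|bnd_tac]
 | |- context [adjoint _ (op_add ?A ?B)] => rewrite (@adj_add A B); [|bnd_tac|bnd_tac]
 | |- context [adjoint _ (op_mul ?A ?B)] => rewrite (@adj_mul A B); [|bnd_tac|bnd_tac]
 end.

Section TS.
Variables T S : V -> V.
Hypotheses (hT : bnd T) (hS : bnd S).
Let hTs := adj_bnd hT.
Let hSs := adj_bnd hS.
Local Notation I := (complex.Complex 0 1 : C).

Ltac fin := apply: functional_extensionality => v;
  rewrite /op_add /op_scale /op_mul;
  rewrite ?(linD hT, linZ hT, linD hS, linZ hS, linD hTs, linZ hTs, linD hSs, linZ hSs);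
  apply: ip_ext => x; rewrite ?(ipDl, ipZl); apply: cplx_eq;
  rewrite ?(cE, cRe_half, cIm_half).

Lemma idA1 t : ReOp inner (op_scale (expi t) (op_add (op_mul T S) (op_scale 1 (op_mul S (adj T))))) =
  op_add (op_mul T (ReOp inner (op_scale (expi t) S))) (op_mul (ReOp inner (op_scale (expi t) S)) (adj T)).
Proof. rewrite /ReOp; adjs; rewrite /expi; fin; ring. Qed.


Lemma idA2 t : ReOp inner (op_scale (expi t) (op_add (op_mul T S) (op_scale (-1) (op_mul S (adj T))))) =
  op_add (op_mul T (op_scale I (ReOp inner (op_scale (expi (t - pi / 2%:R)) S))))
    (op_scale (-1) (op_mul (op_scale I (ReOp inner (op_scale (expi (t - pi / 2%:R)) S))) (adj T))).
Proof. rewrite /ReOp; adjs; rewrite /expi cosBpihalf sinBpihalf; fin; ring. Qed.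

Lemma idB1 t : ReOp inner (op_scale (expi t) (op_add (op_mul T S) (op_scale 1 (op_mul (adj S) T)))) =
  op_add (op_mul (ReOp inner (op_scale (expi t) T)) S) (op_mul (adj S) (ReOp inner (op_scale (expi t) T))).
Proof. rewrite /ReOp; adjs; rewrite /expi; fin; ring. Qed.

Lemma idB2 t : ReOp inner (op_scale (expi t) (op_add (op_mul T S) (op_scale (-1) (op_mul (adj S) T)))) =
  op_add (op_mul (op_scale I (ReOp inner (op_scale (expi (t - pi / 2%:R)) T))) S)
    (op_scale (-1) (op_mul (adj S) (op_scale I (ReOp inner (op_scale (expi (t - pi / 2%:R)) T))))).
Proof. rewrite /ReOp; adjs; rewrite /expi cosBpihalf sinBpihalf; fin; ring. Qed.

Lemma idSplit (s : C) (hs : Im s = 0) W (hW : bnd W) t :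
  ReOp inner (op_scale (expi t) (op_mul T S)) =
  op_add (op_scale 2%:R^-1 (ReOp inner (op_scale (expi t) (op_add (op_mul T S) (op_scale s W)))))
         (op_scale 2%:R^-1 (ReOp inner (op_scale (expi t) (op_add (op_mul T S) (op_scale (- s) W))))).
Proof. rewrite /ReOp; adjs; rewrite /expi; fin; rewrite ?hs; field; done. Qed.

End TS.

Lemma idI A (hA : bnd A) : A = op_add (ReOp inner (op_scale (expi 0) A))
   (op_scale (complex.Complex 0 1) (ReOp inner (op_scale (expi (0 - pi / 2%:R)) A))).
Proof.
rewrite /ReOp; adjs; rewrite /expi cosBpihalf sinBpihalf cos0 sin0.
apply: functional_extensionality => v; rewrite /op_add /op_scale /op_mul.
apply: ip_ext => x; rewrite ?(ipDl, ipZl); apply: cplx_eq;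
  rewrite ?(cE, cRe_half, cIm_half); field; done.
Qed.

Section Main.
Variable N : (V -> V) -> R.
Hypothesis hN : algebra_norm inner N.
Hypothesis hNsa : selfadjoint_norm inner N.
Local Notation nc := (@complex.ComplexField.Normc.normc R).
Local Notation w := (wN inner N).

Lemma nc_expi t : nc (expi t) = 1.
Proof. by rewrite /expi /complex.ComplexField.Normc.normc cos2Dsin2 sqrtr1. Qed.
Lemma nc_half : nc (2%:R^-1) = 2%:R^-1.
Proof.
rewrite two_inv /complex.ComplexField.Normc.normc expr0n addr0 sqrtr_sqr ger0_norm //.
by rewrite invr_ge0 ler0n.
Qed.
Lemma nc_N1 : nc (-1) = 1.
Proof.
have -> : (-1 : C) = complex.Complex (-1) 0 by apply: cplx_eq; rewrite !cE ?oppr0.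
by rewrite /complex.ComplexField.Normc.normc expr0n addr0 sqrrN expr1n sqrtr1.
Qed.
Lemma nc_I : nc (complex.Complex 0 1) = 1.
Proof. by rewrite /complex.ComplexField.Normc.normc expr0n add0r expr1n sqrtr1. Qed.

Lemma N_ge0 A : bnd A -> 0 <= N A. Proof. by case: hN => h _ _ _ _; apply: h. Qed.
Lemma N_scale c A : bnd A -> N (op_scale c A) = nc c * N A.
Proof. by case: hN => _ _ h _ _; apply: h. Qed.
Lemma N_add A B : bnd A -> bnd B -> N (op_add A B) <= N A + N B.
Proof. by case: hN => _ _ _ h _; apply: h. Qed.
Lemma N_mul A B : bnd A -> bnd B -> N (op_mul A B) <= N A * N B.
Proof. by case: hN => _ _ _ _ h; apply: h. Qed.
Lemma N_adj A : bnd A -> N (adj A) = N A.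
Proof. exact: hNsa. Qed.

Lemma N_ReOp A : bnd A -> N (ReOp inner A) <= N A.
Proof.
move=> hA; rewrite /ReOp N_scale ?nc_half; last by bnd_tac.
have := N_add hA (adj_bnd hA); rewrite N_adj //; lra.
Qed.

Lemma N_half_add P Q : bnd P -> bnd Q ->
  N (op_add (op_scale 2%:R^-1 P) (op_scale 2%:R^-1 Q)) <= 2%:R^-1 * N P + 2%:R^-1 * N Q.
Proof.
move=> hP hQ; apply: le_trans (N_add _ _) _; [bnd_tac|bnd_tac|].
by rewrite !N_scale // nc_half.
Qed.

Lemma w_ub A t : bnd A -> N (ReOp inner (op_scale (expi t) A)) <= w A.
Proof.
move=> hA; apply: ub_le_sup; last by exists t.
exists (N A) => _ [s _ <-]; apply: le_trans (N_ReOp _) _; first by bnd_tac.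
by rewrite N_scale // nc_expi mul1r.
Qed.

Lemma w_le A c : (forall t, N (ReOp inner (op_scale (expi t) A)) <= c) -> w A <= c.
Proof.
move=> h; apply: ge_sup; first by exists (N (ReOp inner (op_scale (expi 0) A))), 0.
by move=> _ [t _ <-].
Qed.

Lemma w_ge0 A : bnd A -> 0 <= w A.
Proof. move=> hA; apply: le_trans (w_ub 0 hA); apply: N_ge0; bnd_tac. Qed.

Lemma N_le_2w A : bnd A -> N A <= 2%:R * w A.
Proof.
move=> hA; rewrite {1}(idI hA).
apply: le_trans (N_add _ _) _; [bnd_tac|bnd_tac|].
rewrite (N_scale (complex.Complex 0 1) (bnd_ReOp (bnd_scale (expi (0 - pi / 2%:R)) hA))).
rewrite nc_I mul1r.
have := w_ub 0 hA; have := w_ub (0 - pi / 2%:R) hA; lra.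
Qed.

Section ES.
Variables T S : V -> V.
Hypotheses (hT : bnd T) (hS : bnd S).

Lemma estA (s : C) : s = 1 \/ s = -1 ->
  w (op_add (op_mul T S) (op_scale s (op_mul S (adj T)))) <= 2%:R * (N T * w S).
Proof.
have hT0 := N_ge0 hT.
case=> ->; apply: w_le => t.
  rewrite idA1 //.
  apply: le_trans (N_add _ _) _; [bnd_tac|bnd_tac|].
  have hB : bnd (ReOp inner (op_scale (expi t) S)) by bnd_tac.
  have h1 := N_mul hT hB; have h2 := N_mul hB (adj_bnd hT); rewrite N_adj // in h2.
  have h3 := w_ub t hS; have hB0 := N_ge0 hB.
  have h4 : N T * N (ReOp inner (op_scale (expi t) S)) <= N T * w S by apply: ler_wpM2l.
  nra.
rewrite idA2 //.
apply: le_trans (N_add _ _) _; [bnd_tac|bnd_tac|].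
have hB : bnd (ReOp inner (op_scale (expi (t - pi / 2%:R)) S)) by bnd_tac.
have hC' : bnd (op_scale (complex.Complex 0 1) (ReOp inner (op_scale (expi (t - pi / 2%:R)) S))) by bnd_tac.
rewrite N_scale ?nc_N1 ?mul1r; last by bnd_tac.
have h1 := N_mul hT hC'; have h2 := N_mul hC' (adj_bnd hT); rewrite N_adj // in h2.
rewrite N_scale // nc_I mul1r in h1 h2.
have h3 := w_ub (t - pi / 2%:R) hS; have hB0 := N_ge0 hB.
have h4 : N T * N (ReOp inner (op_scale (expi (t - pi / 2%:R)) S)) <= N T * w S by apply: ler_wpM2l.
nra.
Qed.

Lemma estB (s : C) : s = 1 \/ s = -1 ->
  w (op_add (op_mul T S) (op_scale s (op_mul (adj S) T))) <= 2%:R * (N S * w T).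
Proof.
have hS0 := N_ge0 hS.
case=> ->; apply: w_le => t.
  rewrite idB1 //.
  apply: le_trans (N_add _ _) _; [bnd_tac|bnd_tac|].
  have hB : bnd (ReOp inner (op_scale (expi t) T)) by bnd_tac.
  have h1 := N_mul hB hS; have h2 := N_mul (adj_bnd hS) hB; rewrite N_adj // in h2.
  have h3 := w_ub t hT; have hB0 := N_ge0 hB.
  have h4 : N S * N (ReOp inner (op_scale (expi t) T)) <= N S * w T by apply: ler_wpM2l.
  nra.
rewrite idB2 //.
apply: le_trans (N_add _ _) _; [bnd_tac|bnd_tac|].
have hB : bnd (ReOp inner (op_scale (expi (t - pi / 2%:R)) T)) by bnd_tac.
have hC' : bnd (op_scale (complex.Complex 0 1) (ReOp inner (op_scale (expi (t - pi / 2%:R)) T))) by bnd_tac.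
rewrite N_scale ?nc_N1 ?mul1r; last by bnd_tac.
have h1 := N_mul hC' hS; have h2 := N_mul (adj_bnd hS) hC'; rewrite N_adj // in h2.
rewrite N_scale // nc_I mul1r in h1 h2.
have h3 := w_ub (t - pi / 2%:R) hT; have hB0 := N_ge0 hB.
have h4 : N S * N (ReOp inner (op_scale (expi (t - pi / 2%:R)) T)) <= N S * w T by apply: ler_wpM2l.
nra.
Qed.

Lemma sN (s : C) : s = 1 \/ s = -1 -> - s = 1 \/ - s = -1.
Proof. by case=> ->; [right|left; rewrite opprK]. Qed.
Lemma sIm (s : C) : s = 1 \/ s = -1 -> Im s = 0.
Proof. by case=> ->; rewrite ?cImN cIm1 ?oppr0. Qed.

Lemma firstA (s : C) : s = 1 \/ s = -1 ->
  w (op_mul T S) <= N T * w S + 2%:R^-1 * w (op_add (op_mul T S) (op_scale s (op_mul S (adj T)))).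
Proof.
move=> hs; apply: w_le => t.
have hW : bnd (op_mul S (adj T)) by bnd_tac.
rewrite (idSplit hT hS (sIm hs) hW t).
apply: le_trans (N_half_add _ _) _; [bnd_tac|bnd_tac|].
have h1 := w_ub t (_ : bnd (op_add (op_mul T S) (op_scale s (op_mul S (adj T))))).
have h2 := w_ub t (_ : bnd (op_add (op_mul T S) (op_scale (- s) (op_mul S (adj T))))).
have h3 := estA (sN hs).
have := h1 ltac:(bnd_tac); have := h2 ltac:(bnd_tac); lra.
Qed.

Lemma firstB (s : C) : s = 1 \/ s = -1 ->
  w (op_mul T S) <= N S * w T + 2%:R^-1 * w (op_add (op_mul T S) (op_scale s (op_mul (adj S) T))).
Proof.
move=> hs; apply: w_le => t.
have hW : bnd (op_mul (adj S) T) by bnd_tac.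
rewrite (idSplit hT hS (sIm hs) hW t).
apply: le_trans (N_half_add _ _) _; [bnd_tac|bnd_tac|].
have h1 := w_ub t (_ : bnd (op_add (op_mul T S) (op_scale s (op_mul (adj S) T)))).
have h2 := w_ub t (_ : bnd (op_add (op_mul T S) (op_scale (- s) (op_mul (adj S) T)))).
have h3 := estB (sN hs).
have := h1 ltac:(bnd_tac); have := h2 ltac:(bnd_tac); lra.
Qed.

End ES.
End Main.
End Ops.
End IP.

Lemma min2 (R : realType) (x y u v : R) : x <= 2%:R * u -> y <= 2%:R * v ->
  Num.min x y <= 2%:R * Num.min u v.
Proof.
move=> hx hy; case: (leP u v) => h; case: (leP x y) => h'; lra.
Qed.

Lemma lemin2 (R : realType) (z x y : R) : z <= x -> z <= y -> z <= Num.min x y.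
Proof. by move=> hx hy; case: (leP x y). Qed.
Lemma minle1 (R : realType) (x y : R) : Num.min x y <= x.
Proof. by case: (leP x y) => h //; apply: ltW. Qed.

Theorem theorem2p8 (R : realType) (V : lmodType (CC R)) (inner : V -> V -> CC R)
  (hH : is_hilbert inner) (N : (V -> V) -> R)
  (hN : algebra_norm inner N) (hNsa : selfadjoint_norm inner N)
  (T S : V -> V) (hT : bounded_op inner T) (hS : bounded_op inner S)
  (s : CC R) (hs : s = 1 \/ s = -1) :
  let w := wN inner N in
  let TS := op_mul T S in
  w TS <= Num.min (N T * w S + 2%:R^-1 * w (op_add TS (op_scale s (op_mul S (adjoint inner T)))))
                  (N S * w T + 2%:R^-1 * w (op_add TS (op_scale s (op_mul (adjoint inner S) T))))
  /\ Num.min (N T * w S + 2%:R^-1 * w (op_add TS (op_scale s (op_mul S (adjoint inner T)))))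
             (N S * w T + 2%:R^-1 * w (op_add TS (op_scale s (op_mul (adjoint inner S) T))))
     <= 2%:R * Num.min (N T * w S) (N S * w T)
  /\ 2%:R * Num.min (N T * w S) (N S * w T) <= 4%:R * w T * w S.
Proof.
move=> w TS; case: hH => hI hC; rewrite /w /TS.
have eA := firstA hI hC hN hNsa hT hS hs.
have eB := firstB hI hC hN hNsa hT hS hs.
have fA := estA hI hC hN hNsa hT hS hs.
have fB := estB hI hC hN hNsa hT hS hs.
have wT := w_ge0 hI hC hN hNsa hT.
have wS := w_ge0 hI hC hN hNsa hS.
have nT := N_le_2w hI hC hN hNsa hT.
split.
  exact: lemin2.
split; first by apply: min2; lra.
have h2 : N T * wN inner N S <= 2%:R * wN inner N T * wN inner N S.
  by apply: ler_wpM2r.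
have := minle1 (N T * wN inner N S) (N S * wN inner N T); lra.
Qed.
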